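(* Let $r\geq 2$ and let $G$ be an $r$-uniform hypergraph with vertex set $\{1,\ldots,n\}$ and $m$ edges. If $\mathbf{x}\in\Delta^{n-1}$ is an eigenvector to $\mu(G)$, then \[ \mu(G)\leq m\,\sigma(\mathbf{x})^r. \]
   Context: $\Delta^{n-1}=\{\mathbf{x}\in\mathbb{R}^n: x_i\geq0 \text{ for all } i,\ \sum_i x_i=1\}$. For $G$ with edge set $E$, define \[ P_G(\mathbf{x})=\sum_{\{i_1,\ldots,i_r\}\in E}x_{i_1}\cdots x_{i_r} \qquad\text{and}\qquad \mu(G)=\max_{\mathbf{x}\in\Delta^{n-1}}P_G(\mathbf{x}). \] A vector $\mathbf{x}\in\Delta^{n-1}$ with $P_G(\mathbf{x})=\mu(G)$ is called an eigenvector to $\mu(G)$. $\sigma(\mathbf{x})=x_1^{x_1}\cdots x_n^{x_n}$, with the convention $0^0=1$. *)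

(* Defs.v *)
From HB Require Import structures.
From mathcomp Require Import all_boot all_order all_algebra.
From mathcomp Require Import all_classical all_reals all_analysis.
Set Implicit Arguments. Unset Strict Implicit. Unset Printing Implicit Defensive.
Import Order.TTheory GRing.Theory Num.Theory.
Local Open Scope ring_scope.
Local Open Scope classical_set_scope.

(* Vertex set {1..n} is modelled by 'I_n; a hypergraph is its edge set
   E : {set {set 'I_n}}; it is r-uniform when every edge has exactly r vertices. *)
Definition uniform (n r : nat) (E : {set {set 'I_n}}) : Prop :=
  forall e, e \in E -> #|e| = r.

Definition simplex (R : realType) (n : nat) (x : 'I_n -> R) : Prop :=
  (forall i, 0 <= x i) /\ \sum_(i < n) x i = 1.

Definition lagr (R : realType) (n : nat) (E : {set {set 'I_n}}) (x : 'I_n -> R) : R :=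
  \sum_(e in E) \prod_(i in e) x i.

(* mu(G) = max over the simplex of P_G (taken as the supremum, attained by compactness) *)
Definition mu (R : realType) (n : nat) (E : {set {set 'I_n}}) : R :=
  sup [set lagr E x | x in [set x | simplex x]].

(* sigma(x) = prod x_i^{x_i}, with 0^0 = 1 (powR 0 0 = 1) *)
Definition sigma (R : realType) (n : nat) (x : 'I_n -> R) : R :=
  \prod_(i < n) powR (x i) (x i).

(* Main.v *)
Require Import Defs.
From mathcomp Require Import all_boot all_order all_algebra.
From mathcomp Require Import all_classical all_reals all_analysis.
From mathcomp Require Import ring lra.
Import Order.TTheory GRing.Theory Num.Theory.
Local Open Scope ring_scope.

Section Aux.
Variables (R : realType) (n : nat) (E : {set {set 'I_n}}) (x : 'I_n -> R).

Lemma ln_prod_pos (I : Type) (s : seq I) (P : pred I) (F : I -> R) :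
  (forall i, P i -> 0 < F i) ->
  ln (\prod_(i <- s | P i) F i) = \sum_(i <- s | P i) ln (F i).
Proof.
move=> hF.
have : (0 < \prod_(i <- s | P i) F i) /\ ln (\prod_(i <- s | P i) F i) = \sum_(i <- s | P i) ln (F i).
  apply: (big_ind2 (fun a b => 0 < a /\ ln a = b)).
  - by rewrite ln1 ltr01.
  - move=> a b c d [ha <-] [hc <-]; split; first exact: mulr_gt0.
    by rewrite lnM // posrE.
  - by move=> i Pi; split; [exact: hF|].
by case.
Qed.

Lemma exch (F : {set 'I_n} -> 'I_n -> R) :
  \sum_(e in E) \sum_(i in e) F e i = \sum_i \sum_(e in E | i \in e) F e i.
Proof. by rewrite (exchange_big_dep predT). Qed.

Definition Dv (i : 'I_n) : R :=
  \sum_(e in E) (if i \in e then \prod_(k in e | k != i) x k else 0).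
Definition Cv (i j : 'I_n) : R :=
  \sum_(e in E) (if (i \in e) && (j \in e) then \prod_(k in e | (k != i) && (k != j)) x k else 0).
Definition pert (i j : 'I_n) (t : R) (k : 'I_n) : R :=
  x k - (if k == i then t else 0) + (if k == j then t else 0).

Lemma edge_id (i j : 'I_n) (t : R) (e : {set 'I_n}) : i != j ->
  \prod_(k in e) pert i j t k = \prod_(k in e) x k
   + t * ((if j \in e then \prod_(k in e | k != j) x k else 0)
          - (if i \in e then \prod_(k in e | k != i) x k else 0))
   - t ^+ 2 * (if (i \in e) && (j \in e) then \prod_(k in e | (k != i) && (k != j)) x k else 0).
Proof.
move=> ij.
have ji : j != i by rewrite eq_sym.
have pi : pert i j t i = x i - t by rewrite /pert eqxx (negbTE ij) addr0.
have pj : pert i j t j = x j + t by rewrite /pert eqxx (negbTE ji) subr0.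
have po : forall k, k != i -> k != j -> pert i j t k = x k.
  by move=> k ki kj; rewrite /pert (negbTE ki) (negbTE kj) subr0 addr0.
case hi: (i \in e); case hj: (j \in e) => /=.
- set Q := \prod_(k in e | (k != i) && (k != j)) x k.
  have e1 : \prod_(k in e) pert i j t k = (x i - t) * ((x j + t) * Q).
    rewrite (bigD1 i hi) (bigD1 j); last by rewrite ?hi ?hj ?ij ?ji andbT.
    rewrite pi pj; congr (_ * (_ * _)); rewrite /Q.
    apply: eq_big => k; first by rewrite andbA.
    by case/andP; case/andP => _ a b; rewrite po.
  have e2 : \prod_(k in e) x k = x i * (x j * Q).
    rewrite (bigD1 i hi) (bigD1 j); last by rewrite ?hi ?hj ?ij ?ji andbT.
    congr (_ * (_ * _)); rewrite /Q.
    by apply: eq_bigl => k; rewrite andbA.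
  have e3 : \prod_(k in e | k != i) x k = x j * Q.
    rewrite (bigD1 j); last by rewrite ?hi ?hj ?ij ?ji andbT.
    congr (_ * _); rewrite /Q.
    by apply: eq_bigl => k; rewrite andbA.
  have e4 : \prod_(k in e | k != j) x k = x i * Q.
    rewrite (bigD1 i); last by rewrite ?hi ?hj ?ij ?ji andbT.
    congr (_ * _); rewrite /Q.
    by apply: eq_bigl => k; rewrite -andbA [(_ != j) && _]andbC andbA.
  rewrite e1 e2 e3 e4. ring.
- have e1 : \prod_(k in e) pert i j t k = (x i - t) * \prod_(k in e | k != i) x k.
    rewrite (bigD1 i hi) pi; congr (_ * _); apply: eq_bigr => k /andP[ke ki].
    by rewrite po //; apply/eqP => kj; move/negbT: hj; rewrite -kj; move/negP; apply.
  have e2 : \prod_(k in e) x k = x i * \prod_(k in e | k != i) x k by rewrite (bigD1 i hi).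
  rewrite e1 e2. ring.
- have e1 : \prod_(k in e) pert i j t k = (x j + t) * \prod_(k in e | k != j) x k.
    rewrite (bigD1 j hj) pj; congr (_ * _); apply: eq_bigr => k /andP[ke kj].
    by rewrite po //; apply/eqP => ki; move/negbT: hi; rewrite -ki; move/negP; apply.
  have e2 : \prod_(k in e) x k = x j * \prod_(k in e | k != j) x k by rewrite (bigD1 j hj).
  rewrite e1 e2. ring.
- have e1 : \prod_(k in e) pert i j t k = \prod_(k in e) x k.
    apply: eq_bigr => k ke.
    by rewrite po //; apply/eqP => kj; [move/negbT: hi|move/negbT: hj]; rewrite -kj; move/negP; apply.
  rewrite e1. ring.
Qed.

Lemma lagr_pert (i j : 'I_n) (t : R) : i != j ->
  lagr E (pert i j t) = lagr E x + t * (Dv j - Dv i) - t ^+ 2 * Cv i j.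
Proof.
move=> ij; rewrite /lagr /Dv /Cv.
rewrite (eq_bigr _ (fun e _ => edge_id i j t e ij)).
rewrite sumrB big_split /= -!mulr_sumr sumrB.
by [].
Qed.

Lemma simplex_le1 (y : 'I_n -> R) (k : 'I_n) : simplex y -> 0 <= y k <= 1.
Proof.
case=> h0 h1; rewrite h0 /= -h1 (bigD1 k) //= lerDl.
by apply: sumr_ge0 => l _; exact: h0.
Qed.

Lemma lagr_le_mu (y : 'I_n -> R) : simplex y -> lagr E y <= mu R E.
Proof.
move=> hy; rewrite /mu; apply: ub_le_sup; last by exists y.
exists (#|E|%:R) => z [w hw <-].
rewrite /lagr -sumr_const; apply: ler_sum => e _.
by apply: prodr_ile1 => k _; exact: simplex_le1.
Qed.

Lemma Cv_ge0 (i j : 'I_n) : (forall k, 0 <= x k) -> 0 <= Cv i j.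
Proof.
move=> h; apply: sumr_ge0 => e _; case: ifP => // _.
by apply: prodr_ge0 => k _.
Qed.

Lemma kkt (i j : 'I_n) : simplex x -> lagr E x = mu R E -> 0 < x i -> Dv j <= Dv i.
Proof.
move=> hx heig xi.
have [->|ij] := eqVneq i j; first by [].
rewrite leNgt; apply/negP => hlt.
set d := Dv j - Dv i.
have d0 : 0 < d by rewrite /d subr_gt0.
have C0 := Cv_ge0 i j hx.1.
set C := Cv i j in C0.
set t := Num.min (x i) (d / (2 * (C + 1))).
have t0 : 0 < t by rewrite /t lt_min xi /= divr_gt0 // mulr_gt0 // ltr_pwDr.
have txi : t <= x i by rewrite /t ge_min lexx.
have td : t * (2 * (C + 1)) <= d.
  rewrite -ler_pdivlMr; last by rewrite mulr_gt0 // ltr_pwDr.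
  by rewrite /t ge_min lexx orbT.
have hy : simplex (pert i j t).
  split.
    move=> k; rewrite /pert; have := hx.1 k.
    case: (eqVneq k i) => [->|_]; first by rewrite (negbTE ij); lra.
    case: ifP => _; lra.
  rewrite /pert big_split /= sumrB hx.2.
  rewrite -!big_mkcond /= !big_pred1_eq; lra.
have := lagr_le_mu _ hy; rewrite lagr_pert // heig -/d -/C.
nra.
Qed.

Lemma main_aux (r : nat) : uniform r E -> simplex x -> lagr E x = mu R E ->
  lagr E x <= #|E|%:R * sigma x ^+ r.
Proof.
move=> hE hx heig.
set mu0 := lagr E x.
have hsum : forall i, \sum_(e in E | i \in e) \prod_(k in e) x k = x i * Dv i.
  move=> i; rewrite /Dv mulr_sumr big_mkcondr /=; apply: eq_bigr => e _.
  by case hie: (i \in e); [rewrite (bigD1 i hie) | rewrite mulr0].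
have euler : \sum_i x i * Dv i = r%:R * mu0.
  rewrite -(eq_bigr _ (fun i _ => hsum i)) -(exch (fun e i => \prod_(k in e) x k)).
  rewrite /mu0 /lagr mulr_sumr; apply: eq_bigr => e he.
  by rewrite sumr_const (hE e he) mulr_natl.
have [i0 xi0] : exists i0, 0 < x i0.
  case: (pselect (exists i0, 0 < x i0)) => // H; exfalso.
  have : \sum_i x i = 0.
    apply: big1 => i _; apply/eqP; rewrite eq_le hx.1 andbT leNgt.
    by apply/negP => h; apply: H; exists i.
  by rewrite hx.2 => /eqP; rewrite oner_eq0.
have hM : forall i, x i * Dv i = x i * Dv i0.
  move=> i; case: (eqVneq (x i) 0) => [->|ne]; first by rewrite !mul0r.
  have xi : 0 < x i by rewrite lt_def ne hx.1.
  by congr (_ * _); apply/eqP; rewrite eq_le !kkt.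
have D0 : Dv i0 = r%:R * mu0.
  by rewrite -euler (eq_bigr _ (fun i _ => hM i)) -mulr_suml hx.2 mul1r.
have stepA : forall i, \sum_(e in E | i \in e) \prod_(k in e) x k = r%:R * mu0 * x i.
  by move=> i; rewrite hsum hM D0 mulrC.
have a0 : forall e : {set 'I_n}, 0 <= \prod_(k in e) x k.
  by move=> e; apply: prodr_ge0 => k _; exact: hx.1.
have hpos : forall i, 0 < powR (x i) (x i).
  move=> i; case: (eqVneq (x i) 0) => [->|ne]; first by rewrite powRr0 ltr01.
  by apply: powR_gt0; rewrite lt_def ne hx.1.
have sig0 : 0 < sigma x by apply: prodr_gt0 => i _.
have mu00 : 0 <= mu0 by apply: sumr_ge0 => e _.
case: (eqVneq mu0 0) => [->|mune].
  by apply: mulr_ge0; [exact: ler0n | apply: exprn_ge0; exact: ltW].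
have mup : 0 < mu0 by rewrite lt_def mune mu00.
have m0 : 0 < #|E|%:R :> R.
  rewrite ltr0n lt0n; apply/negP => /eqP/cards0_eq hE0.
  by move: mune; rewrite /mu0 /lagr hE0 big_set0 eqxx.
have lnsig : ln (sigma x) = \sum_i x i * ln (x i).
  by rewrite /sigma ln_prod_pos //; apply: eq_bigr => i _; rewrite ln_powR.
have key : \sum_(e in E) \prod_(k in e) x k * ln (\prod_(k in e) x k)
           = r%:R * mu0 * ln (sigma x).
  have pe : forall e : {set 'I_n}, \prod_(k in e) x k * ln (\prod_(k in e) x k)
                      = \sum_(i in e) \prod_(k in e) x k * ln (x i).
    move=> e; case: (eqVneq (\prod_(k in e) x k) 0) => [h|ne].
      by rewrite h mul0r big1 // => i _; rewrite mul0r.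
    have xk : forall k, k \in e -> 0 < x k.
      move=> k ke; rewrite lt_def hx.1 andbT; apply: contra_neq ne => xk0.
      by rewrite (bigD1 k ke) /= xk0 mul0r.
    by rewrite ln_prod_pos // mulr_sumr.
  rewrite (eq_bigr _ (fun e _ => pe e)) exch lnsig mulr_sumr.
  apply: eq_bigr => i _; rewrite -mulr_suml stepA; ring.
set c := mu0 / #|E|%:R.
have cp : 0 < c by apply: divr_gt0.
have ent : forall e : {set 'I_n}, c * 0 + \prod_(k in e) x k * ln c + \prod_(k in e) x k - c
                     <= \prod_(k in e) x k * ln (\prod_(k in e) x k).
  move=> e; rewrite mulr0 add0r.
  case: (eqVneq (\prod_(k in e) x k) 0) => [->|ne]; first by rewrite !mul0r add0r sub0r oppr_le0 ltW.
  have ap : 0 < \prod_(k in e) x k by rewrite lt_def ne a0.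
  set a := \prod_(k in e) x k in ap ne *.
  have h1 : ln (c / a) <= c / a - 1.
    have := @le_ln1Dx R (c / a - 1); rewrite [1 + _]addrC subrK; apply.
    by rewrite ltrBrDl subrr divr_gt0.
  rewrite ln_div ?posrE // in h1.
  have h2 : a * (ln c - ln a) <= a * (c / a - 1) by rewrite ler_pM2l.
  rewrite mulrBr mulrBr mulr1 mulrCA divff ?mulr1 // in h2; lra.
have sument : \sum_(e in E) (c * 0 + \prod_(k in e) x k * ln c + \prod_(k in e) x k - c)
   <= \sum_(e in E) \prod_(k in e) x k * ln (\prod_(k in e) x k).
  by apply: ler_sum => e _; exact: ent.
rewrite key in sument.
have S : \sum_(e in E) (c * 0 + \prod_(k in e) x k * ln c + \prod_(k in e) x k - c) = mu0 * ln c.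
  rewrite mulr0 big_split /= big_split /= sumrN sumr_const.
  under eq_bigr do rewrite add0r.
  rewrite -mulr_suml -/mu0 -mulr_natr /c divfK; last by rewrite gt_eqF.
  have -> : \sum_(e in E) \prod_(k in e) x k = mu0 by []. ring.
rewrite S in sument.
have lc : ln c <= ln (sigma x ^+ r).
  rewrite lnXn // -mulr_natl.
  rewrite -(ler_pM2l mup).
  by have -> : mu0 * (r%:R * ln (sigma x)) = r%:R * mu0 * ln (sigma x) by ring.
rewrite ler_ln ?posrE ?exprn_gt0 // in lc.
have : mu0 = c * #|E|%:R by rewrite /c divfK // gt_eqF.
nra.
Qed.

End Aux.

Theorem lemma8 (R : realType) (n r : nat) (E : {set {set 'I_n}})
  (hr : (2 <= r)%N) (hE : uniform r E) (x : 'I_n -> R)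
  (hx : simplex x) (heig : lagr E x = mu R E) :
  mu R E <= (#|E|%:R) * sigma x ^+ r.
Proof.
rewrite -heig; exact: (@main_aux R n E x r hE hx heig).
Qed.
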